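(* Let $B,U\ge 1$, $\mathbf{H}\in\mathbb{C}^{B\times U}$, $\mathbf{j}\in\mathbb{C}^B$, and let $\mathbf{y}=\mathbf{H}\mathbf{s}+\mathbf{j}w+\mathbf{n}\in\mathbb{C}^B$, where $\mathbf{s}\in\mathbb{C}^U$ has independent zero-mean entries with $\mathbb{E}[\mathbf{s}\mathbf{s}^H]=E_s\mathbf{I}_U$, $w$ is circularly-symmetric complex Gaussian with variance $E_J$, $\mathbf{n}$ is i.i.d. circularly-symmetric complex Gaussian with per-entry variance $N_0$, and $\mathbf{s},w,\mathbf{n}$ are mutually independent. Let $\mathcal{A},\mathcal{B}\subset\mathbb{C}$ and set $$\mathbf{C}_{\mathbf{y}}=E_s\mathbf{H}\mathbf{H}^H+E_J\mathbf{j}\mathbf{j}^H+N_0\mathbf{I}_B,$$ the covariance matrix of $\mathbf{y}$. Consider the optimization problem $$\{\hat\beta,\hat{\mathbf{b}},\hat{\mathbf{a}}\}=\arg\min_{\beta\in\mathbb{C},\,\mathbf{b}\in\mathcal{B}^B,\,\mathbf{a}\in\mathcal{A}^B}\ \mathbb{E}_{\mathbf{s},w,\mathbf{n}}\big[\|\beta\mathbf{b}\mathbf{a}^H\mathbf{y}-\mathbf{j}w\|^2\big].$$ Then this problem is separable in $\mathbf{b}$ and $\mathbf{a}$, and its solution is given by $$\hat{\mathbf{b}}=\arg\max_{\mathbf{b}\in\mathcal{B}^B}\frac{|\mathbf{j}^H\mathbf{b}|^2}{\|\mathbf{b}\|^2},\qquad \hat{\mathbf{a}}=\arg\max_{\mathbf{a}\in\mathcal{A}^B}\frac{|\mathbf{j}^H\mathbf{a}|^2}{\mathbf{a}^H\mathbf{C}_{\mathbf{y}}\mathbf{a}},\qquad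 \hat\beta=\frac{E_J\,\mathbf{j}^H\hat{\mathbf{a}}\,\hat{\mathbf{b}}^H\mathbf{j}}{\|\hat{\mathbf{b}}\|^2\,\hat{\mathbf{a}}^H\mathbf{C}_{\mathbf{y}}\hat{\mathbf{a}}}.$$
   Context: This arises in choosing an analog transform of the form $\mathbf{P}=\mathbf{I}_B-\beta\mathbf{b}\mathbf{a}^H$ applied to the received vector $\mathbf{y}$ of a multi-antenna receiver with $B$ antennas, $U$ users with channel matrix $\mathbf{H}$, and a jammer with channel $\mathbf{j}$ and transmit signal $w$; minimizing the objective above is equivalent to minimizing $\mathbb{E}\|\mathbf{P}\mathbf{y}-(\mathbf{H}\mathbf{s}+\mathbf{n})\|^2$. $\|\cdot\|$ is the Euclidean norm and $(\cdot)^H$ the conjugate transpose. *)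

(* Defs.v *)
(* Complex scalars: an arbitrary numClosedFieldType C
   (e.g. algC, or R[i] for R : rcfType); this includes the complex numbers. *)
From HB Require Import structures.
From mathcomp Require Import all_boot all_order all_algebra.
Set Implicit Arguments. Unset Strict Implicit. Unset Printing Implicit Defensive.
Import Order.TTheory GRing.Theory Num.Theory.
Local Open Scope ring_scope.

Section Defs.
Variable C : numClosedFieldType.

Definition adjmx (m n : nat) (A : 'M[C]_(m, n)) : 'M[C]_(n, m) :=
  map_mx (fun x => x^*) A^T.

Definition frob2 (m n : nat) (A : 'M[C]_(m, n)) : C :=
  \sum_(i < m) \sum_(k < n) `|A i k| ^+ 2.

Definition sc (M : 'M[C]_1) : C := M 0 0.

Definition vec_in (n : nat) (S : C -> Prop) (v : 'cV[C]_n) : Prop :=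
  forall i, S (v i 0).

Definition covy (B U : nat) (H : 'M[C]_(B, U)) (j : 'cV[C]_B) (Es EJ N0 : C)
  : 'M[C]_B :=
  Es *: (H *m adjmx H) + EJ *: (j *m adjmx j) + N0%:M.

(* E_{s,w,n} || Ls s + Lw w + Ln n ||^2  for mutually independent, zero-mean
   s (E[s s^H] = Es I), w (variance EJ), n (E[n n^H] = N0 I):
   = Es ||Ls||_F^2 + EJ ||Lw||^2 + N0 ||Ln||_F^2. *)
Definition exp_sqerr (B U : nat) (Ls : 'M[C]_(B, U)) (Lw : 'cV[C]_B)
  (Ln : 'M[C]_B) (Es EJ N0 : C) : C :=
  Es * frob2 Ls + EJ * frob2 Lw + N0 * frob2 Ln.

(* Objective  E || beta b a^H y - j w ||^2  with y = H s + j w + n: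
   beta b a^H y - j w = (P H) s + (P j - j) w + P n,  P = beta b a^H. *)
Definition mse (B U : nat) (H : 'M[C]_(B, U)) (j : 'cV[C]_B) (Es EJ N0 : C)
  (beta : C) (b a : 'cV[C]_B) : C :=
  let P := beta *: (b *m adjmx a) in
  exp_sqerr (P *m H) (P *m j - j) P Es EJ N0.

End Defs.

(* Main.v *)
Require Import Defs.
From HB Require Import structures.
From mathcomp Require Import all_boot all_order all_algebra.
From mathcomp Require Import ring.
Import Order.TTheory GRing.Theory Num.Theory.
Local Open Scope ring_scope.
Set Implicit Arguments. Unset Strict Implicit.

Definition ip (C : numClosedFieldType) (n : nat) (u v : 'cV[C]_n) : C :=
  \sum_(i < n) (u i 0)^* * v i 0.

Lemma frob2_col (C : numClosedFieldType) n (v : 'cV[C]_n) : frob2 v = ip v v.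
Proof. by rewrite /frob2 /ip; apply: eq_bigr => i _; rewrite big_ord1 normCK mulrC. Qed.

Lemma sc_ip (C : numClosedFieldType) n (u v : 'cV[C]_n) : sc (adjmx u *m v) = ip u v.
Proof. by rewrite /sc /ip mxE; apply: eq_bigr => i _; rewrite !mxE. Qed.

Lemma ip_conj (C : numClosedFieldType) n (u v : 'cV[C]_n) : (ip u v)^* = ip v u.
Proof. rewrite /ip rmorph_sum; apply: eq_bigr => i _; by rewrite rmorphM /= conjCK mulrC. Qed.

Lemma ipBr (C : numClosedFieldType) n (u v w : 'cV[C]_n) : ip u (v - w) = ip u v - ip u w.
Proof. rewrite /ip -sumrB; apply: eq_bigr => i _; by rewrite !mxE mulrBr. Qed.

Lemma ipBl (C : numClosedFieldType) n (u v w : 'cV[C]_n) : ip (v - w) u = ip v u - ip w u.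
Proof. rewrite /ip -sumrB; apply: eq_bigr => i _; by rewrite !mxE rmorphB mulrBl. Qed.

Lemma ipZr (C : numClosedFieldType) n c (u v : 'cV[C]_n) : ip u (c *: v) = c * ip u v.
Proof. rewrite /ip mulr_sumr; apply: eq_bigr => i _; rewrite !mxE; ring. Qed.

Lemma ipZl (C : numClosedFieldType) n c (u v : 'cV[C]_n) : ip (c *: u) v = c^* * ip u v.
Proof. rewrite /ip mulr_sumr; apply: eq_bigr => i _; rewrite !mxE rmorphM; ring. Qed.

Lemma frob2Z (C : numClosedFieldType) m n c (A : 'M[C]_(m, n)) :
  frob2 (c *: A) = `|c| ^+ 2 * frob2 A.
Proof.
rewrite /frob2 mulr_sumr; apply: eq_bigr => i _; rewrite mulr_sumr.
by apply: eq_bigr => k _; rewrite mxE normrM exprMn.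
Qed.

Lemma frob2_outer (C : numClosedFieldType) m n (u : 'cV[C]_m) (r : 'rV[C]_n) :
  frob2 (u *m r) = frob2 u * frob2 r.
Proof.
rewrite /frob2 big_ord1 mulr_suml; apply: eq_bigr => i _.
rewrite big_ord1 mulr_sumr; apply: eq_bigr => k _.
by rewrite mxE big_ord1 normrM exprMn.
Qed.

Lemma adjmx_mul (C : numClosedFieldType) m n p (A : 'M[C]_(m, n)) (B : 'M[C]_(n, p)) :
  adjmx (A *m B) = adjmx B *m adjmx A.
Proof.
apply/matrixP => i k; rewrite !mxE rmorph_sum; apply: eq_bigr => l _.
by rewrite !mxE rmorphM mulrC.
Qed.

Lemma adjmxK (C : numClosedFieldType) m n (A : 'M[C]_(m, n)) : adjmx (adjmx A) = A.
Proof. by apply/matrixP => i k; rewrite !mxE conjCK. Qed.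

Lemma frob2_row (C : numClosedFieldType) n (r : 'rV[C]_n) : frob2 r = sc (r *m adjmx r).
Proof.
rewrite /frob2 /sc big_ord1 mxE; apply: eq_bigr => k _.
by rewrite !mxE normCK.
Qed.

Lemma frob2_adj (C : numClosedFieldType) n (a : 'cV[C]_n) : frob2 (adjmx a) = ip a a.
Proof.
rewrite /frob2 /ip big_ord1; apply: eq_bigr => k _.
by rewrite !mxE normCK conjCK mulrC.
Qed.

Lemma scD (C : numClosedFieldType) (A B : 'M[C]_1) : sc (A + B) = sc A + sc B.
Proof. by rewrite /sc mxE. Qed.
Lemma scZ (C : numClosedFieldType) c (A : 'M[C]_1) : sc (c *: A) = c * sc A.
Proof. by rewrite /sc mxE. Qed.
Lemma scM (C : numClosedFieldType) (A B : 'M[C]_1) : sc (A *m B) = sc A * sc B.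
Proof. by rewrite /sc mxE big_ord1. Qed.

Lemma mul_col_sc (C : numClosedFieldType) n (u : 'cV[C]_n) (M : 'M[C]_1) :
  u *m M = sc M *: u.
Proof. by apply/matrixP => i k; rewrite !mxE big_ord1 mulrC (ord1 k). Qed.

Lemma q_eq (C : numClosedFieldType) B U (H : 'M[C]_(B, U)) j Es EJ N0 (a : 'cV[C]_B) :
  sc (adjmx a *m covy H j Es EJ N0 *m a) =
  Es * frob2 (adjmx a *m H) + EJ * `|ip j a| ^+ 2 + N0 * ip a a.
Proof.
rewrite /covy !mulmxDr !mulmxDl !scD -!scalemxAr -!scalemxAl !scZ.
rewrite mul_mx_scalar -scalemxAl scZ sc_ip.
rewrite frob2_row adjmx_mul adjmxK !mulmxA.
rewrite -[adjmx a *m j *m adjmx j *m a]mulmxA scM !sc_ip normCK -ip_conj.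
ring.
Qed.

Lemma mse_eq (C : numClosedFieldType) B U (H : 'M[C]_(B, U)) j Es EJ N0 beta (b a : 'cV[C]_B) :
  mse H j Es EJ N0 beta b a =
  beta * beta^* * (ip b b * sc (adjmx a *m covy H j Es EJ N0 *m a))
  - EJ * (beta * (ip a j * ip j b) + (beta * (ip a j * ip j b))^*) + EJ * ip j j.
Proof.
rewrite q_eq /mse /exp_sqerr.
rewrite -!scalemxAl -!mulmxA frob2Z frob2_outer frob2Z frob2_outer frob2_adj.
rewrite [b *m (adjmx a *m j)]mul_col_sc sc_ip scalerA frob2_col.
rewrite frob2_col !ipBl !ipBr !ipZl !ipZr -(ip_conj b j) !normCK !rmorphM /=.
rewrite -(ip_conj a j) !conjCK.
ring.
Qed.

Lemma frob2_ge0 (C : numClosedFieldType) m n (A : 'M[C]_(m, n)) : 0 <= frob2 A.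
Proof. by apply: sumr_ge0 => i _; apply: sumr_ge0 => k _; apply: exprn_ge0. Qed.

Lemma ip_gt0 (C : numClosedFieldType) n (v : 'cV[C]_n) : v != 0 -> 0 < ip v v.
Proof.
move=> nz; rewrite -frob2_col lt0r frob2_ge0 andbT.
apply: contra nz => /eqP /psumr_eq0P h; apply/eqP/matrixP => i k.
have := h (fun i _ => sumr_ge0 _ (fun k _ => exprn_ge0 _ (normr_ge0 _))) i isT.
rewrite big_ord1 (ord1 k) mxE => /eqP; rewrite expf_eq0 /= normr_eq0 => /eqP ->.
done.
Qed.

Lemma key (C : numClosedFieldType) (EJ nj K x beta : C) : 0 <= EJ -> 0 < K ->
  EJ * nj - EJ ^+ 2 * `|x| ^+ 2 / K <=
  beta * beta^* * K - EJ * (beta * x + (beta * x)^*) + EJ * nj.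
Proof.
move=> hE hK; rewrite -subr_ge0.
have -> : beta * beta^* * K - EJ * (beta * x + (beta * x)^*) + EJ * nj -
   (EJ * nj - EJ ^+ 2 * `|x| ^+ 2 / K) = `|K * beta - EJ * x^*| ^+ 2 / K.
  rewrite !normCK rmorphB !rmorphM /= conjCK (geC0_conj hE) (geC0_conj (ltW hK)).
  field; exact: lt0r_neq0.
by apply: divr_ge0; [apply: exprn_ge0 | apply: ltW].
Qed.

Lemma at_opt (C : numClosedFieldType) (EJ nj K x : C) : 0 <= EJ -> 0 < K ->
  let beta := EJ * x^* / K in
  beta * beta^* * K - EJ * (beta * x + (beta * x)^*) + EJ * nj =
  EJ * nj - EJ ^+ 2 * `|x| ^+ 2 / K.
Proof.
move=> hE hK beta; rewrite /beta normCK !rmorphM /= fmorphV /= conjCK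
  (geC0_conj hE) (geC0_conj (ltW hK)).
field; exact: lt0r_neq0.
Qed.

Theorem proposition1 (C : numClosedFieldType) (B U : nat)
  (HB : (0 < B)%N) (HU : (0 < U)%N)
  (H : 'M[C]_(B, U)) (j : 'cV[C]_B) (Es EJ N0 : C)
  (hEs : 0 <= Es) (hEJ : 0 <= EJ) (hN0 : 0 < N0)
  (SA SB : C -> Prop) (bh ah : 'cV[C]_B) :
  (* bh is an argmax of |j^H b|^2 / ||b||^2 over (nonzero) b in SB^B *)
  vec_in SB bh -> bh != 0 ->
  (forall b : 'cV[C]_B, vec_in SB b -> b != 0 ->
     `|sc (adjmx j *m b)| ^+ 2 / frob2 b
       <= `|sc (adjmx j *m bh)| ^+ 2 / frob2 bh) ->
  (* ah is an argmax of |j^H a|^2 / (a^H C_y a) over (nonzero) a in SA^B *)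
  vec_in SA ah -> ah != 0 ->
  (forall a : 'cV[C]_B, vec_in SA a -> a != 0 ->
     `|sc (adjmx j *m a)| ^+ 2 / sc (adjmx a *m covy H j Es EJ N0 *m a)
       <= `|sc (adjmx j *m ah)| ^+ 2
            / sc (adjmx ah *m covy H j Es EJ N0 *m ah)) ->
  (* then (betah, bh, ah) minimizes the MSE over C x SB^B x SA^B *)
  let betah := EJ * sc (adjmx j *m ah) * sc (adjmx bh *m j)
               / (frob2 bh * sc (adjmx ah *m covy H j Es EJ N0 *m ah)) in
  forall (beta : C) (b a : 'cV[C]_B), vec_in SB b -> vec_in SA a ->
    mse H j Es EJ N0 betah bh ah <= mse H j Es EJ N0 beta b a.
Proof.
move=> _ bhnz hb _ ahnz ha betah beta b a hbin hain.
set Q := fun a : 'cV[C]_B => sc (adjmx a *m covy H j Es EJ N0 *m a).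
have Qge0 : forall a, 0 <= Q a.
  move=> a'; rewrite /Q q_eq -frob2_col.
  by rewrite !addr_ge0 // mulr_ge0 // ?frob2_ge0 // ?exprn_ge0 // ltW.
have Qgt0 : forall a, a != 0 -> 0 < Q a.
  move=> a' nz; rewrite /Q q_eq ltr_wpDl //.
    by rewrite !addr_ge0 // mulr_ge0 // ?frob2_ge0 // ?exprn_ge0.
  by rewrite mulr_gt0 // ip_gt0.
have Khgt0 : 0 < ip bh bh * Q ah by rewrite mulr_gt0 // ?ip_gt0 // Qgt0.
have -> : betah = EJ * (ip ah j * ip j bh)^* / (ip bh bh * Q ah).
  by rewrite /betah !sc_ip frob2_col rmorphM /= !ip_conj mulrA.
rewrite !mse_eq -/(Q ah) -/(Q a).
have := @at_opt C EJ (ip j j) _ (ip ah j * ip j bh) hEJ Khgt0; rewrite /= => ->.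
have ip0r : forall u : 'cV[C]_B, ip u 0 = 0.
  by move=> u; rewrite /ip big1 // => i _; rewrite mxE mulr0.
have ip0l : forall u : 'cV[C]_B, ip 0 u = 0.
  by move=> u; rewrite /ip big1 // => i _; rewrite mxE rmorph0 mul0r.
have Lh : EJ * ip j j - EJ ^+ 2 * `|ip ah j * ip j bh| ^+ 2 / (ip bh bh * Q ah)
          <= EJ * ip j j.
  rewrite lerBlDr lerDl; apply: divr_ge0; last exact: ltW.
  by rewrite mulr_ge0 // exprn_ge0.
have [b0|bnz] := eqVneq b 0.
  rewrite b0 !ip0r !(mul0r, mulr0, rmorph0, addr0, subr0, add0r, oppr0).
  exact: Lh.
have [a0|anz] := eqVneq a 0.
  rewrite a0 !ip0l !(mul0r, mulr0, rmorph0, addr0, subr0, add0r, oppr0).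
  apply: le_trans Lh _; rewrite lerDr mulr_ge0 //.
    by rewrite -normCK exprn_ge0.
  by rewrite mulr_ge0 // -frob2_col frob2_ge0.
have Kgt0 : 0 < ip b b * Q a by rewrite mulr_gt0 // ?ip_gt0 // Qgt0.
apply: le_trans (key (ip j j) (ip a j * ip j b) beta hEJ Kgt0).
rewrite lerD2l lerN2.
have M : forall y K' : C, EJ ^+ 2 * y / K' = EJ ^+ 2 * (y / K') by move=> y K'; rewrite mulrA.
rewrite !M ler_wpM2l ?exprn_ge0 //.
have E : forall (u v : 'cV[C]_B), u != 0 -> v != 0 ->
   `|ip u j * ip j v| ^+ 2 / (ip v v * Q u) =
   (`|ip j u| ^+ 2 / Q u) * (`|ip j v| ^+ 2 / ip v v).
  move=> u v unz vnz; rewrite normrM exprMn -(ip_conj j u) norm_conjC.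
  field; apply/andP; split; apply: lt0r_neq0; [exact: ip_gt0 | exact: Qgt0].
rewrite E // E //.
have := hb b hbin bnz; have := ha a hain anz; rewrite !sc_ip !frob2_col -/(Q a) -/(Q ah).
move=> h1 h2; apply: ler_pM => //.
  by apply: divr_ge0; [apply: exprn_ge0 | apply: Qge0].
by apply: divr_ge0; [apply: exprn_ge0 | rewrite -frob2_col frob2_ge0].
Qed.
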